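(* Let $a$ and $b$ be relatively prime integers with $1<a<b$, let $(u,v)$ be the definitely least solution of $ax+by=1$, let $S=\langle a,b\rangle$, and let $h=\min I(S)$. Then $$I(S)=\{\,h+kb+ja : 0\le k\le |v|-1,\ 0\le j\le |u|-1\,\},$$ i.e. $I(S)=\{h,h+a,\dots,h+(|u|-1)a\}\cup\{h+b,h+b+a,\dots,h+b+(|u|-1)a\}\cup\cdots\cup\{h+(|v|-1)b,\dots,h+(|v|-1)b+(|u|-1)a\}$.
   Context: $\mathbb{N}$ is the set of nonnegative integers and $\langle a,b\rangle=\{\lambda_1a+\lambda_2b:\lambda_1,\lambda_2\in\mathbb{N}\}$. An isolated gap of a numerical semigroup $S$ is an element $x\in\mathbb{N}\setminus S$ with $x-1\in S$ and $x+1\in S$; $I(S)$ is the set of isolated gaps (it is nonempty for $S=\langle a,b\rangle$). The definitely least solution $(u,v)$ of $ax+by=1$ is the unique integer solution for which both $|u|$ and $|v|$ are as small as possible; equivalently the solution with $|u|\le b/2$ and $|v|\le a/2$. *)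

(* Defs.v *)
From mathcomp Require Import all_boot all_order all_algebra.
Set Implicit Arguments. Unset Strict Implicit. Unset Printing Implicit Defensive.
Import Order.TTheory GRing.Theory Num.Theory.

Definition in_sg2 (a b x : nat) : Prop := exists l1 l2 : nat, x = l1 * a + l2 * b.

(* x is an isolated gap of <a,b>: x not in S, x-1 in S, x+1 in S.
   (x = 0 is never a gap since 0 is in S, so x >= 1 and x - 1 is the true predecessor.) *)
Definition isolated_gap (a b x : nat) : Prop :=
  [/\ ~ in_sg2 a b x, 0 < x, in_sg2 a b x.-1 & in_sg2 a b x.+1].

(* Main.v *)
Require Import Defs.
From mathcomp Require Import all_boot all_order all_algebra.
From mathcomp Require Import zify ring lra.
Import Order.TTheory GRing.Theory Num.Theory.
Local Open Scope ring_scope.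

Lemma mem_iff (a b : nat) (u v : int) (x : int) (al be : int) :
  a%:Z * u + b%:Z * v = 1 -> (0 < a)%N -> 0 <= be -> be < a%:Z ->
  x = al * a%:Z + be * b%:Z ->
  ((exists l1 l2 : nat, x = (l1 * a + l2 * b)%N :> int) <-> 0 <= al).
Proof.
move=> Huv Ha Hb0 Hb1 Hx; split.
- move=> [l1 [l2 Hl]].
  rewrite Hl PoszD !PoszM in Hx.
  set d := l2%:Z - be.
  set t := d * u + v * (al - l1%:Z).
  have Hd : d = a%:Z * t.
    apply/eqP; rewrite -subr_eq0; apply/eqP.
    have -> : d - a%:Z * t = d * (1 - (a%:Z * u + b%:Z * v))
       + v * (l1%:Z * a%:Z + l2%:Z * b%:Z - (al * a%:Z + be * b%:Z)) by rewrite /t /d; ring.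
    by rewrite Huv Hx subrr subrr mulr0 mulr0 addr0.
  have Ht : 0 <= t by rewrite /d in Hd; nia.
  have Hal : al = l1%:Z + t * b%:Z.
    apply: (@mulIf _ a%:Z); first by lia.
    rewrite /d in Hd. apply/eqP; rewrite -subr_eq0; apply/eqP.
    have -> : al * a%:Z - (l1%:Z + t * b%:Z) * a%:Z =
      (al * a%:Z + be * b%:Z) - (l1%:Z * a%:Z + l2%:Z * b%:Z) + (l2%:Z - be - a%:Z * t) * b%:Z by ring.
    by rewrite Hx -Hd; ring.
  by rewrite Hal; apply: addr_ge0 => //; apply: mulr_ge0.
- move=> Hal; exists `|al|%N, `|be|%N.
  by rewrite PoszD !PoszM !gez0_abs.
Qed.

Arguments mem_iff {a b u v x al be}.

Lemma rep (a b : nat) (u v : int) (x : int) :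
  a%:Z * u + b%:Z * v = 1 -> (0 < a)%N ->
  exists al be : int, [/\ 0 <= be, be < a%:Z & x = al * a%:Z + be * b%:Z].
Proof.
move=> Huv Ha.
exists (x * u + ((x * v) %/ a%:Z)%Z * b%:Z), ((x * v) %% a%:Z)%Z; split.
- by apply: modz_ge0; lia.
- by apply: ltz_pmod; lia.
- have E := divz_eq (x * v) a%:Z.
  have Hx : x = x * (a%:Z * u + b%:Z * v) by rewrite Huv mulr1.
  rewrite [in LHS]Hx mulrDr.
  have -> : x * (b%:Z * v) = (x * v) * b%:Z by ring.
  rewrite [in LHS]E; ring.
Qed.

Arguments rep {a b u v} x.

Lemma sg_int (a b n : nat) :
  in_sg2 a b n <-> exists l1 l2 : nat, n%:Z = (l1 * a + l2 * b)%N :> int.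
Proof.
split; move=> [l1 [l2 H]]; exists l1, l2; first by rewrite H.
by case: H.
Qed.

Lemma memN (a b : nat) (u v : int) (n : nat) (al be : int) :
  a%:Z * u + b%:Z * v = 1 -> (0 < a)%N -> 0 <= be -> be < a%:Z ->
  n%:Z = al * a%:Z + be * b%:Z -> (in_sg2 a b n <-> 0 <= al).
Proof.
move=> Huv Ha H0 H1 Hn; apply: iff_trans (sg_int _ _ _) _; exact: (mem_iff Huv Ha H0 H1 Hn).
Qed.

Arguments memN {a b u v n al be}.

Lemma memN2 (a b : nat) (u v : int) (n : nat) (al be : int) :
  n%:Z = al * a%:Z + be * b%:Z -> a%:Z * u + b%:Z * v = 1 -> (0 < a)%N ->
  0 <= be -> be < a%:Z -> 0 <= al -> in_sg2 a b n.
Proof. move=> Hn Huv Ha H0 H1; exact: (proj2 (memN Huv Ha H0 H1 Hn)). Qed.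

Arguments memN2 {a b u v n al be}.

Lemma charI (a b : nat) (u v : int) (x : nat) :
  (1 < a)%N -> (a < b)%N ->
  a%:Z * u + b%:Z * v = 1 ->
  (2 * `|u| <= b)%N -> (2 * `|v| <= a)%N ->
  isolated_gap a b x <->
  exists al be : int, [/\ - (`|u|%N%:Z) <= al, al <= -1, a%:Z - `|v|%N%:Z <= be,
     be <= a%:Z - 1 & x%:Z = al * a%:Z + be * b%:Z].
Proof.
move=> Ha Hab Huv HU HV.
have Ha0 : (0 < a)%N by lia.
have Hv0 : v != 0.
  apply/negP => /eqP v0; rewrite v0 mulr0 addr0 in Huv.
  case: (lerP u 0) => hu; nia.
have Hsv : (0 < v /\ u < 0) \/ (v < 0 /\ 0 < u).
  case: (ltrgtP v 0) => hv; last by rewrite hv eqxx in Hv0.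
  - right; split => //; case: (lerP u 0) => hu //; nia.
  - left; split => //; case: (lerP 0 u) => hu //; nia.
split.
- case=> Hns Hx0 Hm Hp.
  have [al [be [Hb0 Hb1 Hx]]] := rep x Huv Ha0.
  have Hal : al < 0.
    case: (ltrP al 0) => // h; exfalso; apply: Hns.
    by apply/(memN Huv Ha0 Hb0 Hb1 Hx).
  have Hxm : (x.-1)%:Z = x%:Z - 1 by lia.
  have Hxp : (x.+1)%:Z = x%:Z + 1 by lia.
  exists al, be.
  case: Hsv => [[hv hu]|[hv hu]].
  + have Hbe : a%:Z - `|v|%N%:Z <= be.
      case: (ltrP (be + v) a%:Z) => h; last by lia.
      exfalso.
      have := (memN (al := al + u) (be := be + v) (n := x.+1) Huv Ha0).
      have E : (x.+1)%:Z = (al + u) * a%:Z + (be + v) * b%:Z by rewrite Hxp Hx -Huv; ring.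
      move=> /(_ ltac:(lia) h E) [H _]; have := H Hp; lia.
    have := (memN (al := al - u) (be := be - v) (n := x.-1) Huv Ha0).
    have E : (x.-1)%:Z = (al - u) * a%:Z + (be - v) * b%:Z by rewrite Hxm Hx -Huv; ring.
    move=> /(_ ltac:(lia) ltac:(lia) E) [H _]; have := H Hm => H2.
    split => //; lia.
  + have Hbe : a%:Z - `|v|%N%:Z <= be.
      case: (ltrP (be - v) a%:Z) => h; last by lia.
      exfalso.
      have := (memN (al := al - u) (be := be - v) (n := x.-1) Huv Ha0).
      have E : (x.-1)%:Z = (al - u) * a%:Z + (be - v) * b%:Z by rewrite Hxm Hx -Huv; ring.
      move=> /(_ ltac:(lia) h E) [H _]; have := H Hm; lia.
    have := (memN (al := al + u) (be := be + v) (n := x.+1) Huv Ha0).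
    have E : (x.+1)%:Z = (al + u) * a%:Z + (be + v) * b%:Z by rewrite Hxp Hx -Huv; ring.
    move=> /(_ ltac:(lia) ltac:(lia) E) [H _]; have := H Hp => H2.
    split => //; lia.
- move=> [al [be [H1 H2 H3 H4 Hx]]].
  have Hb0 : 0 <= be by lia.
  have Hb1 : be < a%:Z by lia.
  have Hns : ~ in_sg2 a b x.
    by move/(memN Huv Ha0 Hb0 Hb1 Hx); lia.
  have Hx0 : (0 < x)%N.
    case: (x) Hns => [|x'] Hns' //; exfalso; apply: Hns'; by exists 0%N, 0%N.
  have Hxm : (x.-1)%:Z = x%:Z - 1 by lia.
  have Hxp : (x.+1)%:Z = x%:Z + 1 by lia.
  split => //.
  + case: Hsv => [[hv hu]|[hv hu]].
    * have E : (x.-1)%:Z = (al - u) * a%:Z + (be - v) * b%:Z by rewrite Hxm Hx -Huv; ring.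
      apply: (memN2 E Huv Ha0); lia.
    * have E : (x.-1)%:Z = (al - u + b%:Z) * a%:Z + (be - v - a%:Z) * b%:Z by rewrite Hxm Hx -Huv; ring.
      apply: (memN2 E Huv Ha0); lia.
  + case: Hsv => [[hv hu]|[hv hu]].
    * have E : (x.+1)%:Z = (al + u + b%:Z) * a%:Z + (be + v - a%:Z) * b%:Z by rewrite Hxp Hx -Huv; ring.
      apply: (memN2 E Huv Ha0); lia.
    * have E : (x.+1)%:Z = (al + u) * a%:Z + (be + v) * b%:Z by rewrite Hxp Hx -Huv; ring.
      apply: (memN2 E Huv Ha0); lia.
Qed.

Arguments charI {a b u v} x.

Local Close Scope ring_scope.

Theorem theorem4p8 (a b : nat) (u v : int) (h : nat) :
  coprime a b -> 1 < a -> a < b ->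
  (* (u,v) is the definitely least solution of a x + b y = 1 *)
  (a%:Z * u + b%:Z * v = 1)%R ->
  (2 * `|u| <= b)%N -> (2 * `|v| <= a)%N ->
  (* h = min I(S) *)
  isolated_gap a b h -> (forall x, isolated_gap a b x -> h <= x) ->
  forall x : nat,
    isolated_gap a b x <->
    exists k j : nat, [/\ k < `|v|, j < `|u| & x = h + k * b + j * a].
Proof.
Open Scope ring_scope.
move=> _ Ha Hab Huv HU HV Hh Hmin x.
pose h0 : int := (- (`|u|%N%:Z) * a%:Z + (a%:Z - `|v|%N%:Z) * b%:Z)%R.
have [al0 [be0 [H1 H2 H3 H4 Hh0]]] := (proj1 (charI h Ha Hab Huv HU HV) Hh).
have Hge : (h0 <= h%:Z)%R.
  have -> : h%:Z = (h0 + (al0 + `|u|%N%:Z) * a%:Z + (be0 - (a%:Z - `|v|%N%:Z)) * b%:Z)%R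
    by rewrite Hh0 /h0; ring.
  rewrite -addrA lerDl; apply: addr_ge0; apply: mulr_ge0; lia.
have Hh0pos : (0 <= h0)%R.
  have p1 : (0 <= (2 * (a%:Z - `|v|%N%:Z) - a%:Z) * b%:Z)%R by apply: mulr_ge0; lia.
  have p2 : (0 <= a%:Z * (b%:Z - 2 * `|u|%N%:Z))%R by apply: mulr_ge0; lia.
  rewrite /h0; nia.
have Hle : (h%:Z <= h0)%R.
  have : isolated_gap a b `|h0|%N.
    apply/(charI _ Ha Hab Huv HU HV).
    exists (- (`|u|%N%:Z))%R, (a%:Z - `|v|%N%:Z)%R; split; try lia.
  move/Hmin; rewrite -(gez0_abs Hh0pos); lia.
have Heq : h%:Z = h0 by lia.
rewrite (charI x Ha Hab Huv HU HV); split.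
- move=> [al [be [G1 G2 G3 G4 Hx]]].
  exists `|(be - (a%:Z - `|v|%N%:Z))%R|%N, `|(al + `|u|%N%:Z)%R|%N; split; try lia.
- move=> [k [j [K1 K2 ->]]].
  exists (- (`|u|%N%:Z) + j%:Z)%R, (a%:Z - `|v|%N%:Z + k%:Z)%R; split; try lia.
Qed.
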